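(* The map $R:\mathbb{CP}^2\dashrightarrow\mathbb{CP}^2$ is algebraically stable.
   Context: $R[U:V:W]=[(U^2+V^2)^2:V^2(U+W)^2:(V^2+W^2)^2]$, a rational map of $\mathbb{CP}^2$ with indeterminacy points $[\pm i:1:\mp i]$. A rational map $R:\mathbb{CP}^2\dashrightarrow\mathbb{CP}^2$ is algebraically stable if there is no integer $n\ge0$ and no algebraic curve $V$ collapsed by $R$ (to a point) such that $R^n(V)$ is contained in the indeterminacy set of $R$; equivalently $\deg R^n=(\deg R)^n$ for all $n$, where $\deg$ is the degree of the reduced homogeneous lift. *)

(* Defs.v *)
From HB Require Import structures.
From mathcomp Require Import all_boot all_order all_algebra.
From mathcomp Require Import mpoly.

Set Implicit Arguments.
Unset Strict Implicit.
Unset Printing Implicit Defensive.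

Import Order.TTheory GRing.Theory Num.Theory.
Local Open Scope ring_scope.

Section RationalMap.
Variable C : numClosedFieldType.

(* homogeneous coordinates [U:V:W] = [X_0 : X_1 : X_2] on P^2(C) *)
Notation P := {mpoly C[3]}.
Definition U : P := 'X_(@Ordinal 3 0 isT).
Definition V : P := 'X_(@Ordinal 3 1 isT).
Definition W : P := 'X_(@Ordinal 3 2 isT).

Definition Rlift : 3.-tuple P :=
  [tuple (U ^+ 2 + V ^+ 2) ^+ 2; V ^+ 2 * (U + W) ^+ 2; (V ^+ 2 + W ^+ 2) ^+ 2].

Fixpoint Riter_lift (n : nat) : 3.-tuple P :=
  match n with
  | 0 => [tuple U; V; W]
  | k.+1 => [tuple of map (fun p => p \mPo Riter_lift k) Rlift]
  end.

(* G is a homogeneous lift of degree d of the rational map R^n: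
   G = (G_0,G_1,G_2) not all zero, each G_i homogeneous of degree d,
   and G defines the same rational map as the composite lift,
   i.e. G is proportional to Riter_lift n. *)
Definition is_lift_iter (n d : nat) (G : 3.-tuple P) : Prop :=
  [/\ exists i, tnth G i != 0,
      forall i, tnth G i \is d.-homog &
      forall i j, tnth G i * tnth (Riter_lift n) j
                  = tnth G j * tnth (Riter_lift n) i].

(* reduced: the components have no non-constant common factor *)
Definition reduced (G : 3.-tuple P) : Prop :=
  forall h : P, (forall i, exists q : P, tnth G i = h * q) -> (msize h <= 1)%N.

(* "deg R^n = d": d is the degree of a reduced homogeneous lift of R^n *)
Definition deg_iter_is (n d : nat) : Prop :=
  exists G, is_lift_iter n d G /\ reduced G.

End RationalMap.

(* Main.v *)
Require Import Defs.
From mathcomp Require Import all_boot all_order all_algebra.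
From mathcomp Require Import mpoly.
From HB Require Import structures.
From mathcomp Require Import ring zify.

Set Implicit Arguments. Unset Strict Implicit. Unset Printing Implicit Defensive.

Module Aux.
Import Order.TTheory GRing.Theory Num.Theory.
Local Open Scope ring_scope.
Section Sub.
Variables (R : idomainType) (n : nat) (i : 'I_n).
Local Notation P := {mpoly R[n]}.

Definition sig (p : P) : P := p \mPo [tuple (if j == i then 0 else 'X_j) | j < n].

Definition E (m : 'X_{1..n}) : P := if m i == 0%N then 'X_[m] else 0.

Lemma sigX m : sig 'X_[m] = E m.
Proof.
rewrite /sig comp_mpolyX /E; case: eqP => hm.
  rewrite [RHS]mpolyXE_id; apply: eq_bigr => j _; rewrite tnth_mktuple.
  by case: eqP => [->|//]; rewrite hm !expr0.
rewrite (bigD1 i) //= tnth_mktuple eqxx expr0n.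
by move/eqP/negbTE: hm => ->; rewrite mul0r.
Qed.

Lemma sigE p : sig p = \sum_(m <- msupp p) p@_m *: E m.
Proof.
rewrite /sig comp_mpolyEX; apply: eq_bigr => m _; by rewrite -sigX.
Qed.

Lemma sigXi j : sig 'X_j = if j == i then 0 else 'X_j.
Proof.
by rewrite sigX /E mnm1E; case: (j == i).
Qed.

Lemma sigEE m : sig (E m) = E m.
Proof. by rewrite /E; case: eqP => h; rewrite ?sigX /E ?h // /sig comp_mpoly0. Qed.

Lemma sig_id p : sig (sig p) = sig p.
Proof.
rewrite (sigE p) /sig raddf_sum; apply: eq_bigr => m _.
by rewrite /= comp_mpolyZ -/(sig _) sigEE.
Qed.

Lemma msize_sig p : (msize (sig p) <= msize p)%N.
Proof.
rewrite sigE; apply: (leq_trans (msize_sum _ _ _)).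
apply/bigmax_leqP_seq => m mp _; apply: (leq_trans (msizeZ_le _ _)).
rewrite /E; case: eqP => _; last by rewrite msize0.
by rewrite msizeX; apply: msize_mdeg_lt.
Qed.

Lemma Xdiv (m : 'X_{1..n}) : m i <> 0%N -> 'X_[m] = 'X_i * 'X_[(m - U_(i))%MM] :> P.
Proof.
move=> hm; rewrite -mpolyXD; congr 'X_[_]; apply/mnmP => j.
rewrite mnmDE mnmBE mnm1E; case: eqP => [<-|_]; last by rewrite subn0.
by rewrite add1n subn1 prednK // lt0n; apply/eqP.
Qed.

Lemma sig_div p : exists r, p = sig p + 'X_i * r.
Proof.
exists (\sum_(m <- msupp p) p@_m *: (if m i == 0%N then 0 else 'X_[(m - U_(i))%MM])).
rewrite sigE mulr_sumr -big_split /= {1}[p]mpolyE; apply: eq_bigr => m _.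
rewrite -scalerAr -scalerDr /E; congr (_ *: _); case: eqP => h.
  by rewrite mulr0 addr0.
by rewrite add0r Xdiv.
Qed.

Lemma sig_ker p : sig p = 0 -> exists r, p = 'X_i * r.
Proof. by move=> h; have [r hr] := sig_div p; exists r; rewrite hr h add0r. Qed.
End Sub.
Section Main.
Variable C : numClosedFieldType.
Local Notation P := {mpoly C[3]}.
Local Notation U := (U C). Local Notation V := (V C). Local Notation W := (W C).
Local Notation i0 := (@Ordinal 3 0 isT).
Local Notation i1 := (@Ordinal 3 1 isT).
Local Notation i2 := (@Ordinal 3 2 isT).

Lemma Xneq0 (j : 'I_3) : 'X_j != 0 :> P.
Proof. by rewrite -msize_poly_eq0 msizeX. Qed.

Lemma sigM (j : 'I_3) (a b : P) : sig j (a * b) = sig j a * sig j b.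
Proof. exact: rmorphM. Qed.
Lemma sigXn (j : 'I_3) (a : P) k : sig j (a ^+ k) = sig j a ^+ k.
Proof. exact: rmorphXn. Qed.
Lemma sigD (j : 'I_3) (a b : P) : sig j (a + b) = sig j a + sig j b.
Proof. exact: rmorphD. Qed.
Lemma sigB (j : 'I_3) (a b : P) : sig j (a - b) = sig j a - sig j b.
Proof. exact: rmorphB. Qed.

Lemma BIV (x y : P) N : x * W ^+ N = y * U ^+ N ->
  exists h, x = U ^+ N * h /\ y = W ^+ N * h.
Proof.
move=> e.
have UN : U ^+ N != 0 by rewrite expf_neq0 // Xneq0.
have WN k : W ^+ k != 0 by rewrite expf_neq0 // Xneq0.
suff [h hy] : exists h, y = W ^+ N * h.
  exists h; split; last by [].
  apply: (mulIf (WN N)).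
  by rewrite e hy; ring.
suff H k : (k <= N)%N -> exists h, y = W ^+ k * h by exact: H.
elim: k => [|k IH] hk; first by exists y; rewrite expr0 mul1r.
have [h hh] := IH (ltnW hk).
have e2 : x * W ^+ (N - k) = h * U ^+ N.
  apply: (mulfI (WN k)); rewrite mulrCA -exprD subnKC ?(ltnW hk) //.
  by rewrite e hh mulrA.
have : sig i2 h = 0.
  have := congr1 (sig i2) e2; rewrite !sigM !sigXn /Defs.U /Defs.W !sigXi /=.
  rewrite expr0n subn_eq0 leqNgt hk mulr0 => /esym/eqP.
  by rewrite mulf_eq0 expf_eq0 (negbTE (Xneq0 _)) andbF orbF => /eqP.
by move/sig_ker => [r hr]; exists r; rewrite hh hr exprS /Defs.W mulrA (mulrC _ 'X__) -mulrA.
Qed.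

Lemma msizeXi (j : 'I_3) : msize ('X_j : P) = 2%N.
Proof. by rewrite msizeX mdeg1. Qed.

Lemma msizeXn (j : 'I_3) k : msize ('X_j ^+ k : P) = k.+1.
Proof.
elim: k => [|k IH]; first by rewrite expr0 msize1.
rewrite exprS msizeM; [|exact: Xneq0|by rewrite expf_neq0 // Xneq0].
by rewrite IH msizeX mdeg1.
Qed.

Lemma SZ (A g q0 r Y : P) N : Y != 0 -> msize Y = N.+1 ->
  (msize A <= N.+1)%N -> sig i1 g = Y * q0 ->
  g - q0 * A = V * r -> (msize r + (g != 0%R) <= msize g)%N.
Proof.
move=> UN sY hA hg hr.
have [g0|gn0] := eqVneq g 0.
  move: hg; rewrite g0 /sig comp_mpoly0 => /esym/eqP.
  rewrite mulf_eq0 (negbTE UN) /= => /eqP q00.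
  move: hr; rewrite g0 q00 mul0r subr0 => /esym/eqP.
  by rewrite mulf_eq0 (negbTE (Xneq0 _)) /= => /eqP ->; rewrite msize0.
have [r0|rn0] := eqVneq r 0; first by rewrite r0 msize0 add0n lt0n msize_poly_eq0.
rewrite addn1.
have : msize (V * r) = (msize r).+1 by rewrite msizeM ?Xneq0 // msizeXi.
move=> <-; rewrite -hr; apply: (leq_trans (msizeD_le _ _)).
rewrite geq_max leqnn msizeN /=.
have [q00|qn0] := eqVneq q0 0; first by rewrite q00 mul0r msize0.
have [A0|An0] := eqVneq A 0; first by rewrite A0 mulr0 msize0.
rewrite msizeM //.
have := msize_sig i1 g; rewrite hg msizeM // sY => h2.
apply: leq_trans h2; rewrite addSn /=.
move: hA; case: (mmeasure mdeg A) => [|a] ha; first by rewrite addn0; apply: leq_trans (leq_pred _) (leq_addl _ _).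
by rewrite addnS /= addnC leq_add2r -ltnS.
Qed.

Lemma sigU : sig i1 U = U.
Proof. by rewrite /Defs.U sigXi. Qed.

Lemma KEY (A B : P) N : sig i1 A = U ^+ N -> sig i1 B = W ^+ N ->
  (msize A <= N.+1)%N -> (msize B <= N.+1)%N ->
  forall g0 g2 : P, g0 * B = g2 * A -> exists q, g0 = q * A /\ g2 = q * B.
Proof.
move=> rA rB sA sB g0 g2.
move: {2}(msize g0 + msize g2)%N (leqnn (msize g0 + msize g2)%N) => s.
elim: s g0 g2 => [|s IH] g0 g2 hs e.
  exists 0; rewrite !mul0r; split; apply/eqP; rewrite -msize_poly_eq0; lia.
have := congr1 (sig i1) e; rewrite !sigM rA rB => /BIV [h [h0 h2]].
set q0 := sig i1 h.
have e0 : sig i1 g0 = U ^+ N * q0 by rewrite -sig_id h0 sigM sigXn sigU.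
have e2 : sig i1 g2 = W ^+ N * q0.
  by rewrite -sig_id h2 sigM sigXn /Defs.W sigXi.
have [r0 hr0] : exists r0, g0 - q0 * A = V * r0.
  by apply: sig_ker; rewrite sigB sigM sig_id rA e0 mulrC subrr.
have [r2 hr2] : exists r2, g2 - q0 * B = V * r2.
  by apply: sig_ker; rewrite sigB sigM sig_id rB e2 mulrC subrr.
have UN : U ^+ N != 0 by rewrite expf_neq0 // Xneq0.
have WN : W ^+ N != 0 by rewrite expf_neq0 // Xneq0.
have z0 := SZ UN (msizeXn _ _) sA e0 hr0.
have z2 := SZ WN (msizeXn _ _) sB e2 hr2.
have er : r0 * B = r2 * A.
  apply: (mulfI (Xneq0 i1)); rewrite !mulrA -/(Defs.V C) -hr0 -hr2.
  by rewrite !mulrBl e mulrAC.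
have [g00|gn] := boolP ((g0 == 0) && (g2 == 0)).
  by case/andP: g00 => /eqP -> /eqP ->; exists 0; rewrite !mul0r.
have [q' [hq0 hq2]] : exists q', r0 = q' * A /\ r2 = q' * B.
  apply: IH er; move: gn z0 z2 hs.
  case: (g0 == 0); case: (g2 == 0) => //= _; lia.
exists (q0 + V * q'); split.
  by move/eqP: hr0; rewrite subr_eq => /eqP ->; rewrite hq0; ring.
by move/eqP: hr2; rewrite subr_eq => /eqP ->; rewrite hq2; ring.
Qed.

Lemma compXj (j : 'I_3) (L : 3.-tuple P) : 'X_j \mPo L = tnth L j.
Proof. by rewrite comp_mpolyXU -tnth_nth. Qed.

Lemma cXn (L : 3.-tuple P) (p : P) m : p ^+ m \mPo L = (p \mPo L) ^+ m.
Proof. exact: rmorphXn. Qed.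
Lemma cD (L : 3.-tuple P) (p q : P) : (p + q) \mPo L = (p \mPo L) + (q \mPo L).
Proof. exact: rmorphD. Qed.
Lemma cM (L : 3.-tuple P) (p q : P) : (p * q) \mPo L = (p \mPo L) * (q \mPo L).
Proof. exact: rmorphM. Qed.

Lemma iterS k : 
  let L := Riter_lift C k in
  [/\ tnth (Riter_lift C k.+1) i0 = (tnth L i0 ^+ 2 + tnth L i1 ^+ 2) ^+ 2,
      tnth (Riter_lift C k.+1) i1 = tnth L i1 ^+ 2 * (tnth L i0 + tnth L i2) ^+ 2 &
      tnth (Riter_lift C k.+1) i2 = (tnth L i1 ^+ 2 + tnth L i2 ^+ 2) ^+ 2].
Proof.
move=> L; rewrite /= !tnth_map /=.
have t0 : tnth (Rlift C) i0 = (U ^+ 2 + V ^+ 2) ^+ 2 by [].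
have t1 : tnth (Rlift C) i1 = V ^+ 2 * (U + W) ^+ 2 by [].
have t2 : tnth (Rlift C) i2 = (V ^+ 2 + W ^+ 2) ^+ 2 by [].
by rewrite t0 t1 t2 !(cXn, cD, cM) /Defs.U /Defs.V /Defs.W !compXj.
Qed.

Lemma Xhomog (j : 'I_3) : ('X_j : P) \is 1.-homog.
Proof. by apply/dhomogP => m; rewrite msuppX inE => /eqP ->; exact: mdeg1. Qed.

Lemma iter_prop k : let F := Riter_lift C k in
  [/\ forall j, tnth F j \is (4 ^ k)%N.-homog,
      sig i1 (tnth F i0) = U ^+ (4 ^ k), sig i1 (tnth F i1) = 0 &
      sig i1 (tnth F i2) = W ^+ (4 ^ k)].
Proof.
elim: k => [|k [H0 H1 H2 H3]].
  split.
  - move=> j; rewrite expn0.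
    by case: j => [[|[|[|m]]] hj] //; rewrite /tnth /= /Defs.U /Defs.V /Defs.W Xhomog.
  - by rewrite /tnth /= expr1 /Defs.U sigXi.
  - by rewrite /tnth /= /Defs.V sigXi.
  - by rewrite /tnth /= expr1 /Defs.W sigXi.
have [E0 E1 E2] := iterS k.
have e4 : (4 ^ k.+1 = 4 ^ k * (2 * 2))%N by rewrite expnS; lia.
split.
- move=> j; case: j => [[|[|[|m]]] hj] //.
  + have -> : Ordinal hj = i0 by exact: val_inj.
    rewrite E0 e4 mulnA; apply: dhomogMn; apply: dhomogD; apply: dhomogMn; exact: H0.
  + have -> : Ordinal hj = i1 by exact: val_inj.
    have -> : (4 ^ k.+1 = 4 ^ k * 2 + 4 ^ k * 2)%N by rewrite expnS; lia.
    rewrite E1; apply: dhomogM; apply: dhomogMn; last apply: dhomogD; exact: H0.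
  + have -> : Ordinal hj = i2 by exact: val_inj.
    rewrite E2 e4 mulnA; apply: dhomogMn; apply: dhomogD; apply: dhomogMn; exact: H0.
- by rewrite E0 sigXn sigD !sigXn H1 H2 expr0n /= addr0 -!exprM e4.
- by rewrite E1 sigM !sigXn H2 expr0n /= mul0r.
- by rewrite E2 sigXn sigD !sigXn H2 H3 expr0n /= add0r -!exprM e4.
Qed.

Lemma msize_homog (p : P) N : p \is N.-homog -> (msize p <= N.+1)%N.
Proof.
have [->|pn0] := eqVneq p 0; first by rewrite msize0.
move=> hp; have := dhomog_uniq pn0 hp (dhomog_msize hp).
have : msize p != 0%N by rewrite msize_poly_eq0.
by case: (msize p) => [|m] //= _ ->.
Qed.

Lemma F0n0 n : tnth (Riter_lift C n) i0 != 0.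
Proof.
have [_ H1 _ _] := iter_prop n.
apply/eqP => h; move: H1; rewrite h /sig comp_mpoly0 => /esym/eqP.
by rewrite expf_eq0 (negbTE (Xneq0 _)) andbF.
Qed.

Theorem main : forall n d : nat, deg_iter_is C n d <-> d = (4 ^ n)%N.
Proof.
move=> n d; set N := (4 ^ n)%N.
have [Hh H1 _ H3] := iter_prop n.
set F := Riter_lift C n in Hh H1 H3 *.
have F0 : tnth F i0 != 0 := F0n0 n.
have KF := KEY H1 H3 (msize_homog (Hh i0)) (msize_homog (Hh i2)).
have ord3 (j : 'I_3) : [\/ j = i0, j = i1 | j = i2].
  by case: j => [[|[|[|m]]] hj] //; [constructor 1|constructor 2|constructor 3]; apply: val_inj.
split.
- move=> [G [[[i Gi] hom rel] red]].
  have [q [q0 q2]] := KF _ _ (rel i0 i2).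
  have q1 : tnth G i1 = q * tnth F i1.
    apply: (mulIf F0); rewrite rel q0; ring.
  have Gq j : tnth G j = q * tnth F j.
    by case: (ord3 j) => ->.
  have := red q (fun j => ex_intro _ _ (Gq j)) => /msize1_polyC qc.
  move: Gi; rewrite Gq qc mul_mpolyC => Gi.
  apply: (dhomog_uniq Gi); first by rewrite -mul_mpolyC -qc -Gq.
  by apply: dhomogZ.
- move=> ->; exists F; split.
    split; [by exists i0| by [] | by move=> i j; rewrite mulrC].
  move=> h hq.
  have [q0 e0] := hq i0; have [q2 e2] := hq i2.
  have hn0 : h != 0 by apply: contraNneq F0 => h0; rewrite e0 h0 mul0r.
  have rel : q0 * tnth F i2 = q2 * tnth F i0.
    by apply: (mulfI hn0); rewrite !mulrA -e0 -e2 mulrC.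
  have [r [r0 _]] := KF _ _ rel.
  have hr : h * r = 1.
    by apply: (mulIf F0); rewrite mul1r -mulrA -r0 -e0.
  have rn0 : r != 0 by apply: contra_eq_neq hr => ->; rewrite mulr0 eq_sym oner_neq0.
  have := congr1 (fun p : P => msize p) hr; rewrite msizeM // msize1.
  have : msize r != 0%N by rewrite msize_poly_eq0.
  case: (msize r) => [|s] //= _; case: (msize h) => [|[|t]] //=; lia.
Qed.
End Main.
End Aux.

(* Algebraic stability of R: deg R^n = (deg R)^n = 4^n for all n
   (the case n = 1 gives deg R = 4). *)
Theorem proposition4p4 (C : numClosedFieldType) :
  forall n d : nat, deg_iter_is C n d <-> d = (4 ^ n)%N.
Proof. exact: (@Aux.main C). Qed.
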